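(* Let $d\ge1$, $a$, $b$ be integers and $x_0$ a real number. If for every $x\le x_0$ $$\pi(x;d,a)\ge\pi(x;d,b)\qquad\text{and}\qquad\sum_{\substack{1<p^r\le x\\ p\equiv a\ (\mathrm{mod}\ d)}}\log p\ge\sum_{\substack{1<p^r\le x\\ p\equiv b\ (\mathrm{mod}\ d)}}\log p,$$ then $\lambda_{d,a}(x)\ge\lambda_{d,b}(x)$ for every $x\le x_0$.
   Context: $p$ runs over primes and $r$ over positive integers. $\pi(x;d,a)$ is the number of primes $p\le x$ with $p\equiv a\pmod d$. Let $S_{d,a}$ be the set of positive integers all of whose prime divisors $p$ satisfy $p\equiv a\pmod d$ (including $1$), and $\lambda_{d,a}(x)=\sum_{n\le x,\ n\in S_{d,a}}\log n$ (in the paper $\lambda_{g_{d,a}}(x)$, with $g_{d,a}$ the indicator of $S_{d,a}$). *)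

(* Defs.v *)
From mathcomp Require Import all_boot.
From Stdlib Require Import Reals ZArith.

Set Implicit Arguments.

Definition congr (d a : Z) (p : nat) : bool :=
  Z.eqb (Z.modulo (Z.of_nat p) d) (Z.modulo a d).

Fixpoint rsum_upto (N : nat) (f : nat -> R) : R :=
  match N with
  | O => f O
  | S k => Rplus (rsum_upto k f) (f (S k))
  end.

(* Number of integers n <= x (x real); 0 for x < 0 is handled by the
   indicator (n <= x) inside each sum, summing n over 0 .. |floor x|. *)
Definition upto (x : R) : nat := Z.to_nat (up (Rabs x)).

Definition le_x (n : nat) (x : R) : bool :=
  if Rle_dec (INR n) x then true else false.

Definition pi_ap (x : R) (d a : Z) : R :=
  rsum_upto (upto x) (fun n =>
    if [&& le_x n x, prime n & congr d a n] then 1%R else 0%R).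

(* n is a prime power p^r with r >= 1 exactly when it has exactly one prime
   divisor; then p = the unique element of primes n. *)
Definition ppow_base (n : nat) : option nat :=
  match primes n with
  | [:: p] => Some p
  | _ => None
  end.

Definition theta_ap (x : R) (d a : Z) : R :=
  rsum_upto (upto x) (fun n =>
    match ppow_base n with
    | Some p => if le_x n x && congr d a p then ln (INR p) else 0%R
    | None => 0%R
    end).

Definition in_S (d a : Z) (n : nat) : bool :=
  leq 1 n && all (congr d a) (primes n).

Definition lambda_ap (x : R) (d a : Z) : R :=
  rsum_upto (upto x) (fun n =>
    if le_x n x && in_S d a n then ln (INR n) else 0%R).

(* Main.v *)
Require Import Defs.
From mathcomp Require Import all_boot.
From Stdlib Require Import Reals ZArith.
From Stdlib Require Import Lia Lra.
From mathcomp Require Import ssreflect ssrfun ssrbool eqtype ssrnat seq div prime bigop path.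
From mathcomp Require Import zify.
Set Warnings "-notation-overridden".
Set Implicit Arguments. Unset Strict Implicit.

Definition inSP (P : pred nat) n := (0 < n) && all P (primes n).
Definition base k := if ppow_base k is Some p then p else 1.
Definition PPw (P: pred nat) k := if ppow_base k is Some p then P p else false.

Lemma primes_pow p e : prime p -> primes (p ^ e.+1) = [:: p].
Proof.
move=> pp; rewrite -(primes_prime pp); apply/eq_primes => q.
rewrite !mem_primes expn_gt0 prime_gt0 //=.
case pq: (prime q) => //=.
by rewrite Euclid_dvdX // andbT dvdn_prime2 ?pq ?(prime_gt0 pp).
Qed.

Lemma ppowP k p : ppow_base k = Some p <-> prime p /\ exists e, k = p ^ e.+1.
Proof.
split.
- rewrite /ppow_base; case E: (primes k) => [|q [|r s]] // [<-].
  have qk : q \in primes k by rewrite E inE eqxx.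
  move: (qk); rewrite mem_primes => /and3P[pq k0 _]; split => //.
  have : 0 < logn q k by rewrite logn_gt0.
  case L: (logn q k) => [|e] // _; exists e; rewrite -L.
  apply: eqn_from_log => //.
  move=> r; rewrite lognX (logn_prime r pq).
  case: eqP => [->|ne]; first by rewrite muln1.
  rewrite muln0; apply/eqP; rewrite eqn0Ngt logn_gt0 E inE; exact/eqP.
- by case=> pp [e ->]; rewrite /ppow_base primes_pow.
Qed.

Lemma logn_prod (I : Type) (r : seq I) (P : pred I) F q :
  (forall i, P i -> 0 < F i) ->
  logn q (\prod_(i <- r | P i) F i) = \sum_(i <- r | P i) logn q (F i).
Proof.
move=> Fp; elim: r => [|i r IH]; first by rewrite !big_nil logn1.
rewrite !big_cons; case Pi: (P i) => //.
by rewrite lognM ?IH ?Fp // prodn_cond_gt0.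
Qed.

Lemma base_prime k : ppow_base k -> prime (base k).
Proof. rewrite /base; case E: (ppow_base k) => [p|] // _; by case/ppowP: E. Qed.

Lemma cnt_ppow r n N : prime r -> 0 < n -> n <= N ->
 \sum_(0 <= k < N.+1 | (ppow_base k == Some r) && (k %| n)) 1 = logn r n.
Proof.
move=> pr n0 nN.
rewrite sum1_count -size_filter.
rewrite -[logn r n](size_iota 1) -(size_map (expn r) (iota 1 _)).
apply: perm_size; apply: uniq_perm.
- by rewrite filter_uniq // /index_iota iota_uniq.
- by rewrite (map_inj_uniq (expnI (prime_gt1 pr))) iota_uniq.
move=> k; rewrite mem_filter mem_index_iota; apply/idP/mapP.
- case/andP => /andP[/eqP/ppowP[_ [e ->]] dv] _; exists e.+1 => //.
  by rewrite mem_iota /= add1n ltnS -pfactor_dvdn.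
- case=> e; rewrite mem_iota => /andP[e1 el] ->.
  case: e e1 el => [|e] // _; rewrite add1n ltnS => el.
  have dv : r ^ e.+1 %| n by rewrite pfactor_dvdn.
  rewrite dv andbT /=; apply/andP; split.
  + by apply/eqP/ppowP; split => //; exists e.
  + by rewrite ltnS (leq_trans (dvdn_leq n0 dv)).
Qed.

Lemma PPw_ppow P k : PPw P k -> ppow_base k.
Proof. by rewrite /PPw; case: (ppow_base k). Qed.

Lemma PPw_base P k : PPw P k -> P (base k).
Proof. by rewrite /PPw /base; case: (ppow_base k). Qed.

Lemma base_gt0 P k : PPw P k -> 0 < base k.
Proof. by move=> h; exact: prime_gt0 (base_prime (PPw_ppow h)). Qed.

Lemma fact_decomp P n N : inSP P n -> n <= N ->
  n = \prod_(0 <= k < N.+1 | PPw P k && (k %| n)) base k.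
Proof.
case/andP => n0 allPn nN.
apply: eqn_from_log => //; first by apply: prodn_cond_gt0 => k /andP[/base_gt0].
move=> r; rewrite logn_prod; last by move=> k /andP[/base_gt0].
rewrite (eq_bigr (fun k => nat_of_bool (r == base k))); last first.
  by move=> k /andP[/PPw_ppow/base_prime pk _]; rewrite logn_prime.
case pr: (prime r && P r).
- case/andP: pr => pr Pr.
  rewrite -(cnt_ppow pr n0 nN) big_mkcond [RHS]big_mkcond /=.
  apply: eq_bigr => k _; rewrite /PPw /base.
  case: (ppow_base k) => [p|] //=.
  case: (eqVneq r p) => [<-|ne]; first by rewrite Pr eqxx.
  have -> : (Some p == Some r) = false.
    by apply/eqP => [[e]]; move: ne; rewrite e eqxx.
  by case: (P p); case: (k %| n); rewrite //= (negbTE ne).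
- rewrite big1; last first.
    move=> k /andP[Pk _]; case: eqP => // e; move: pr.
    by rewrite e (PPw_base Pk) andbT (base_prime (PPw_ppow Pk)).
  apply/eqP; rewrite eqn0Ngt logn_gt0; apply/negP => rn.
  move: (rn); rewrite mem_primes => /andP[prr _].
  by move: pr; rewrite prr (allP allPn _ rn).
Qed.

Definition Th P y := \prod_(0 <= k < y.+1 | PPw P k) base k.
Definition Lp P N := \prod_(0 <= n < N.+1 | inSP P n) n.
Definition Cn P k N := \sum_(0 <= m < N.+1 | inSP P m && (k * m <= N)) 1.

Lemma prod_const_sum (r : seq nat) (Q : pred nat) c :
  \prod_(i <- r | Q i) c = c ^ (\sum_(i <- r | Q i) 1).
Proof.
rewrite (big_morph (expn c) (expnD c) (expn0 c)).
by apply: eq_bigr => i _; rewrite expn1.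
Qed.

Lemma exch P Q N :
  \prod_(0 <= m < N.+1 | inSP P m) Th Q (N %/ m)
  = \prod_(0 <= k < N.+1 | PPw Q k) base k ^ Cn P k N.
Proof.
rewrite (eq_bigr (fun m => \prod_(0 <= k < N.+1 | PPw Q k)
                             (if k * m <= N then base k else 1))); last first.
  move=> m /andP[m0 _]; rewrite /Th -big_mkcondr.
  rewrite (@big_nat_widen _ _ _ 0 (N %/ m).+1 N.+1); last by rewrite ltnS leq_div.
  by apply: eq_bigl => k; rewrite ltnS leq_divRL.
rewrite exchange_big_nat; apply: eq_bigr => k _.
by rewrite -big_mkcondr prod_const_sum.
Qed.

Lemma ppow_primes P k : PPw P k -> primes k = [:: base k] /\ 0 < k.
Proof.
rewrite /PPw /base; case E: (ppow_base k) => [p|] // _.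
case/ppowP: E => pp [e ->]; split; first exact: primes_pow.
by rewrite expn_gt0 prime_gt0.
Qed.

Lemma cnt_mult P k N : PPw P k ->
  \sum_(0 <= n < N.+1 | inSP P n && (k %| n)) 1 = Cn P k N.
Proof.
move=> Pk; have [pk k0] := ppow_primes Pk.
rewrite /Cn !sum1_count -!size_filter.
rewrite -(size_map (muln k) [seq m <- index_iota 0 N.+1 | inSP P m && (k * m <= N)]).
apply: perm_size; apply: uniq_perm.
- by rewrite filter_uniq // /index_iota iota_uniq.
- rewrite map_inj_in_uniq; first by rewrite filter_uniq // /index_iota iota_uniq.
  by move=> x y _ _ /eqP; rewrite eqn_pmul2l // => /eqP.
move=> n; rewrite mem_filter mem_index_iota; apply/idP/mapP.
- case/andP => /andP[/andP[n0 Pn] kn] /andP[_ nN].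
  have kln : k <= n by apply: dvdn_leq.
  exists (n %/ k); last by rewrite mulnC divnK.
  rewrite mem_filter mem_index_iota /= mulnC divnK // -ltnS nN andbT.
  rewrite (leq_ltn_trans (leq_div _ _)) // andbT /inSP divn_gt0 // kln /=.
  apply/allP => p; rewrite mem_primes => /and3P[pp _ pd]; apply: (allP Pn).
  by rewrite mem_primes pp n0 /= (dvdn_trans pd) // -{2}(divnK kn) dvdn_mulr.
- case=> m; rewrite mem_filter mem_index_iota => /andP[/andP[/andP[m0 Pm] kmN] _] ->.
  rewrite ltnS kmN andbT dvdn_mulr // andbT /inSP muln_gt0 k0 m0 /= andbT.
  apply/allP => p; rewrite primesM // pk inE => /orP[/eqP->|pm].
  + exact: PPw_base Pk.
  + exact: (allP Pm).
Qed.

Lemma decomp P N : Lp P N = \prod_(0 <= k < N.+1 | PPw P k) base k ^ Cn P k N.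
Proof.
rewrite /Lp big_seq_cond.
rewrite [LHS](eq_bigr (fun n => \prod_(0 <= k < N.+1 | PPw P k) (if k %| n then base k else 1))); last first.
  move=> n /andP[nin Sn]; rewrite -big_mkcondr; apply: fact_decomp => //.
  by move: nin; rewrite mem_index_iota ltnS.
rewrite -[LHS]big_seq_cond exchange_big_nat; apply: eq_bigr => k Pk.
by rewrite -big_mkcondr prod_const_sum cnt_mult.
Qed.

Definition cnt (P : pred nat) m := \sum_(0 <= p < m.+1 | prime p && P p) 1.

Lemma cntS P m : cnt P m.+1 = cnt P m + (if prime m.+1 && P m.+1 then 1 else 0).
Proof. by rewrite /cnt big_mkcond big_nat_recr //= -big_mkcond. Qed.

Lemma cnt0 P : cnt P 0 = 0.
Proof. by rewrite /cnt big_mkcond big_nat1. Qed.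

Lemma cnt_mono P m d : cnt P m <= cnt P (m + d).
Proof. elim: d => [|d IH]; first by rewrite addn0. rewrite addnS cntS; lia. Qed.

Lemma phi_ex (A B : pred nat) q : exists p, (fun p => (cnt B q <= cnt A p) || (p == q)) p.
Proof. by exists q; rewrite eqxx orbT. Qed.

Definition phi (A B : pred nat) q := ex_minn (phi_ex A B q).

Lemma phi_props (A B : pred nat) q : prime q -> B q -> cnt B q <= cnt A q ->
  [/\ phi A B q <= q, prime (phi A B q) && A (phi A B q) & cnt A (phi A B q) = cnt B q].
Proof.
move=> pq Bq H; rewrite /phi; case: ex_minnP => p Pp minp.
have pleq : p <= q by apply: minp; rewrite eqxx orbT.
have hp : cnt B q <= cnt A p.
  by case/orP: Pp => // /eqP ->.
have cB : 0 < cnt B q.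
  case: q pq Bq {H Pp minp pleq hp} => // q pq Bq; rewrite cntS pq Bq /=; lia.
case: p Pp minp pleq hp => [|p] Pp minp pleq hp; first by move: hp; rewrite cnt0; lia.
have hp' : cnt A p < cnt B q.
  rewrite ltnNge; apply/negP => h.
  have := minp p; rewrite h /= => /(_ isT); lia.
move: hp; rewrite cntS; case: (prime p.+1 && A p.+1) => /= hp; split => //; lia.
Qed.

Lemma cnt_strict (B : pred nat) q q' : prime q' -> B q' -> q < q' -> cnt B q < cnt B q'.
Proof.
case: q' => // q' pq Bq lt; rewrite cntS pq Bq /=.
have := cnt_mono B q (q' - q); have -> : q + (q' - q) = q' by lia.
move=> h; rewrite addn1 ltnS; exact: h.
Qed.

Section Inj.
Variables (A B : pred nat) (N : nat).
Hypothesis H : forall m, m <= N -> cnt B m <= cnt A m.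

Let good q := [&& prime q, B q & q <= N].

Lemma phi_good q : good q ->
  [/\ phi A B q <= q, prime (phi A B q) && A (phi A B q) & cnt A (phi A B q) = cnt B q].
Proof. by case/and3P => pq Bq qN; apply: phi_props => //; apply: H. Qed.

Lemma phi_inj q q' : good q -> good q' -> phi A B q = phi A B q' -> q = q'.
Proof.
move=> gq gq' e.
have [_ _ c] := phi_good gq; have [_ _ c'] := phi_good gq'.
have cc : cnt B q = cnt B q' by rewrite -c -c' e.
case/and3P: gq => pq Bq _; case/and3P: gq' => pq' Bq' _.
case: (ltngtP q q') => // lt.
- by have := cnt_strict pq' Bq' lt; rewrite cc ltnn.
- by have := cnt_strict pq Bq lt; rewrite cc ltnn.
Qed.

Definition fm m := \prod_(q <- primes m) phi A B q ^ logn q m.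

Lemma good_primes m q : inSP B m -> m <= N -> q \in primes m -> good q.
Proof.
case/andP => m0 Bm mN qm; move: (qm); rewrite mem_primes => /and3P[pq _ qd].
by rewrite /good pq (allP Bm _ qm) (leq_trans (dvdn_leq m0 qd) mN).
Qed.

Lemma logn_f r m : inSP B m -> m <= N ->
  logn r (fm m) = \sum_(q <- primes m) (r == phi A B q) * logn q m.
Proof.
move=> Sm mN; rewrite /fm big_seq logn_prod; last first.
  move=> q qm; have [_ /andP[pp _] _] := phi_good (good_primes Sm mN qm).
  by rewrite expn_gt0 prime_gt0.
rewrite [RHS]big_seq; apply: eq_bigr => q qm.
have [_ /andP[pp _] _] := phi_good (good_primes Sm mN qm).
by rewrite lognX (logn_prime r pp) mulnC.
Qed.

Lemma logn_phi q m : good q -> inSP B m -> m <= N ->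
  logn (phi A B q) (fm m) = logn q m.
Proof.
move=> gq Sm mN; rewrite logn_f //.
have ne q' : q' \in primes m -> q' != q -> (phi A B q == phi A B q') = false.
  move=> q'm nq; apply/negbTE; apply: contra nq => /eqP e.
  by apply/eqP; apply: phi_inj (good_primes Sm mN q'm) gq _.
case qm: (q \in primes m).
- rewrite (bigD1_seq q qm (primes_uniq m)) /= eqxx mul1n big1_seq ?addn0 //.
  by move=> q' /andP[nq q'm]; rewrite ne.
- rewrite big1_seq; last by move=> q' /andP[_ q'm]; rewrite ne //; apply: contraFneq qm => <-.
  by apply/eqP; rewrite eq_sym eqn0Ngt logn_gt0 qm.
Qed.

Lemma fm_props m : inSP B m -> m <= N -> fm m <= m /\ inSP A (fm m).
Proof.
move=> Sm mN; have m0 : 0 < m by case/andP: Sm.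
split.
- rewrite {2}(prod_prime_decomp m0) prime_decompE big_map /= /fm big_seq [X in _ <= X]big_seq.
  apply: leq_prod => q qm; have [le _ _] := phi_good (good_primes Sm mN qm).
  by rewrite leq_exp2r // logn_gt0.
- apply/andP; split.
    rewrite /fm big_seq; apply: prodn_cond_gt0 => q qm.
    have [_ /andP[pp _] _] := phi_good (good_primes Sm mN qm).
    by rewrite expn_gt0 prime_gt0.
  apply/allP => r rf; move: (rf); rewrite -logn_gt0 logn_f //.
  case: (boolP (has (fun q => r == phi A B q) (primes m))).
  + case/hasP => q qm /eqP -> _.
    by have [_ /andP[_ ->] _] := phi_good (good_primes Sm mN qm).
  + move/hasPn => nh; rewrite big1_seq //.
    by move=> q /andP[_ qm]; rewrite (negbTE (nh q qm)).
Qed.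

Lemma fm_inj m m' : inSP B m -> m <= N -> inSP B m' -> m' <= N -> fm m = fm m' -> m = m'.
Proof.
move=> Sm mN Sm' mN' e.
have m0 : 0 < m by case/andP: Sm.
have m0' : 0 < m' by case/andP: Sm'.
apply: eqn_from_log => // q.
case: (boolP ((q \in primes m) || (q \in primes m'))).
- case/orP => qm.
  + have gq := good_primes Sm mN qm.
    by rewrite -(logn_phi gq Sm mN) -(logn_phi gq Sm' mN') e.
  + have gq := good_primes Sm' mN' qm.
    by rewrite -(logn_phi gq Sm mN) -(logn_phi gq Sm' mN') e.
- rewrite negb_or => /andP[qm qm'].
  by move: qm qm'; rewrite -!logn_gt0 -!eqn0Ngt => /eqP-> /eqP->.
Qed.

Lemma count_inj k : Cn B k N <= Cn A k N.
Proof.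
rewrite /Cn !sum1_count -!size_filter.
set s := [seq m <- _ | inSP B m & k * m <= N].
rewrite -(size_map fm s); apply: uniq_leq_size.
- rewrite map_inj_in_uniq; first by rewrite filter_uniq // /index_iota iota_uniq.
  move=> x y; rewrite !mem_filter !mem_index_iota.
  move=> /andP[/andP[Sx _] /andP[_ xN]] /andP[/andP[Sy _] /andP[_ yN]].
  by apply: fm_inj.
- move=> z /mapP[m]; rewrite mem_filter mem_index_iota.
  move=> /andP[/andP[Sm kmN] /andP[_ mN]] ->.
  have [le SA] := fm_props Sm mN.
  rewrite mem_filter mem_index_iota SA /= (leq_ltn_trans le mN) andbT.
  by rewrite (leq_trans _ kmN) // leq_mul2l le orbT.
Qed.

End Inj.

Theorem core (A B : pred nat) N : (forall m, m <= N -> cnt B m <= cnt A m /\ Th B m <= Th A m) ->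
  Lp B N <= Lp A N.
Proof.
move=> H.
have Hc m : m <= N -> cnt B m <= cnt A m by move=> /H[].
rewrite (decomp B N) (decomp A N) -(exch A A N).
apply: (@leq_trans (\prod_(0 <= k < N.+1 | PPw B k) base k ^ Cn A k N)).
  apply: leq_prod => k Bk; apply: leq_pexp2l; first exact: base_gt0 Bk.
  exact: count_inj.
rewrite -(exch A B N); apply: leq_prod => m _.
by case: (H (N %/ m) (leq_div _ _)).
Qed.

Lemma rsum_ext U f g : (forall n, n <= U -> f n = g n) -> rsum_upto U f = rsum_upto U g.
Proof.
elim: U => [|U IH] H /=; first by apply: H.
by rewrite IH ?H // => n nU; apply: H; apply: (leq_trans nU).
Qed.

Lemma rsum_cut N d f g : (forall n, n <= N + d -> f n = if n <= N then g n else 0%R) ->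
  rsum_upto (N + d) f = rsum_upto N g.
Proof.
elim: d => [|d IH] H.
- rewrite addn0; apply: rsum_ext => n nN; by rewrite H ?addn0 // nN.
- rewrite addnS /= IH; last by move=> n nd; apply: H; rewrite addnS (leq_trans nd).
  rewrite H ?addnS // ifF; first by rewrite Rplus_0_r.
  by apply/negbTE; rewrite -ltnNge ltnS leq_addr.
Qed.

Lemma rsum_zero U f : (forall n, n <= U -> f n = 0%R) -> rsum_upto U f = 0%R.
Proof.
elim: U => [|U IH] H /=; first by apply: H.
by rewrite IH ?H ?Rplus_0_r // => n nU; apply: H; apply: (leq_trans nU).
Qed.

Lemma INR_muln a b : INR (a * b) = (INR a * INR b)%R.
Proof. exact: mult_INR. Qed.
Lemma INR_addn a b : INR (a + b) = (INR a + INR b)%R.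
Proof. exact: plus_INR. Qed.

Lemma INR_gt0 n : 0 < n -> (0 < INR n)%R.
Proof. by move=> h; apply: lt_0_INR; apply/ltP. Qed.

Lemma rsum_ln (S : pred nat) F N : (forall n, S n -> 0 < F n) ->
  rsum_upto N (fun n => if S n then ln (INR (F n)) else 0%R)
  = ln (INR (\prod_(0 <= n < N.+1 | S n) F n)).
Proof.
move=> Fp; elim: N => [|N IH] /=.
- rewrite big_mkcond big_nat1; case: (S 0) => //; by rewrite /= ln_1.
- rewrite IH [in RHS]big_mkcond big_nat_recr //= -big_mkcond INR_muln.
  have P0 : (0 < INR (\prod_(0 <= n < N.+1 | S n) F n))%R.
    by apply: INR_gt0; apply: prodn_cond_gt0.
  case SN: (S N.+1).
  + by rewrite /= ln_mult //; apply: INR_gt0; apply: Fp.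
  + by rewrite /= Rmult_1_r Rplus_0_r.
Qed.

Lemma rsum_cnt (S : pred nat) N :
  rsum_upto N (fun n => if S n then 1%R else 0%R) = INR (\sum_(0 <= n < N.+1 | S n) 1).
Proof.
elim: N => [|N IH] /=.
- by rewrite big_mkcond big_nat1; case: (S 0).
- rewrite IH [in RHS]big_mkcond big_nat_recr //= -big_mkcond INR_addn.
  by case: (S N.+1).
Qed.

Lemma floor_spec x : (0 <= x)%R -> exists N,
  (forall n, le_x n x = (n <= N)) /\ N <= upto x.
Proof.
move=> x0; have [H1 H2] := archimed x.
have up0 : (0 < up x)%Z by apply: lt_IZR; apply: Rle_lt_trans H1.
exists (Z.to_nat (up x) - 1); split.
- move=> n; rewrite /le_x; case: Rle_dec => h; apply/esym.
  + have : (Z.of_nat n < up x)%Z.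
      by apply: lt_IZR; rewrite -INR_IZR_INZ; apply: Rle_lt_trans H1.
    move=> hz; apply/leP; lia.
  + apply/negP => /leP hn; apply: h.
    have hz : (Z.of_nat n + 1 <= up x)%Z by lia.
    have := IZR_le _ _ hz; rewrite plus_IZR -INR_IZR_INZ => hr.
    lra.
- rewrite /upto Rabs_pos_eq //; apply/leP; lia.
Qed.

Lemma conv x d c N : (forall n, le_x n x = (n <= N)) -> N <= upto x ->
  [/\ pi_ap x d c = INR (cnt (congr d c) N),
      theta_ap x d c = ln (INR (Th (congr d c) N))
    & lambda_ap x d c = ln (INR (Lp (congr d c) N))].
Proof.
move=> hle hU; rewrite /pi_ap /theta_ap /lambda_ap.
have [D ->] : exists D, upto x = N + D by exists (upto x - N); rewrite subnKC.
split.
- rewrite (@rsum_cut N D _ (fun n => if prime n && congr d c n then 1%R else 0%R)).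
    exact: rsum_cnt.
  by move=> n _; rewrite hle; case: (n <= N).
- rewrite (@rsum_cut N D _ (fun n => if PPw (congr d c) n then ln (INR (base n)) else 0%R)).
    by rewrite rsum_ln // => n; apply: base_gt0.
  by move=> n _; rewrite /PPw /base hle; case: (ppow_base n) => [p|]; case: (n <= N).
- rewrite (@rsum_cut N D _ (fun n => if inSP (congr d c) n then ln (INR n) else 0%R)).
    by rewrite (@rsum_ln _ id) // => n /andP[].
  by move=> n _; rewrite hle; case: (n <= N).
Qed.

Lemma Lp_gt0 P N : 0 < Lp P N.
Proof. by apply: prodn_cond_gt0 => n /andP[]. Qed.

Lemma Th_gt0 P N : 0 < Th P N.
Proof. by apply: prodn_cond_gt0 => n; apply: base_gt0. Qed.

Unset Implicit Arguments.
Theorem corollary2 (d a b : Z) (x0 : R) :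
  (1 <= d)%Z ->
  (forall x : R, (x <= x0)%R ->
     (pi_ap x d b <= pi_ap x d a)%R /\ (theta_ap x d b <= theta_ap x d a)%R) ->
  forall x : R, (x <= x0)%R -> (lambda_ap x d b <= lambda_ap x d a)%R.
Proof.
move=> d1 Hyp x xx0.
case: (Rlt_or_le x 0) => [xneg | xpos].
- have z : forall c, lambda_ap x d c = 0%R.
    move=> c; apply: rsum_zero => n _; rewrite /le_x; case: Rle_dec => //= h.
    by exfalso; have := pos_INR n; lra.
  rewrite !z; exact: Rle_refl.
- have [N [hle hU]] := floor_spec xpos.
  have [_ _ ->] := conv d b hle hU; have [_ _ ->] := conv d a hle hU.
  have INx : (INR N <= x)%R by have := hle N; rewrite leqnn /le_x; case: Rle_dec.
  have key : Lp (congr d b) N <= Lp (congr d a) N.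
    apply: core => m mN.
    have xm : (INR m <= x0)%R.
      by apply: Rle_trans xx0; apply: Rle_trans INx; apply: le_INR; apply/leP.
    have [N' [hle' hU']] := floor_spec (pos_INR m).
    have eN : N' = m.
      apply/eqP; rewrite eqn_leq -hle'; apply/andP; split.
        have := hle' N'; rewrite leqnn /le_x; case: Rle_dec => // h _.
        by apply/leP; apply: INR_le.
      by rewrite /le_x; case: Rle_dec => // h; exfalso; apply: h; apply: Rle_refl.
    subst N'; have [hp ht] := Hyp _ xm.
    have [pb tb _] := conv d b hle' hU'; have [pa ta _] := conv d a hle' hU'.
    rewrite pb pa in hp; rewrite tb ta in ht; split.
      by apply/leP; apply: INR_le.
    rewrite leqNgt; apply/negP => /ltP lt.
    have := ln_increasing _ _ (INR_gt0 (Th_gt0 (congr d a) m)) (lt_INR _ _ lt); lra.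
  move/leP/le_INR: key => h.
  case: (Rle_lt_or_eq_dec _ _ h) => [lt|->]; last exact: Rle_refl.
  by apply: Rlt_le; apply: ln_increasing => //; apply: INR_gt0; apply: Lp_gt0.
Qed.
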